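(* Let $G$ be a connected graph and let $uv$ be a cut edge of $G$ that is not pendent (i.e. $d_G(u)\ge 2$ and $d_G(v)\ge 2$). Let $G'$ be the graph obtained from $G$ by contracting the edge $uv$ onto the vertex $u$ (so $u$ becomes adjacent to all former neighbors of $u$ and of $v$ other than $u,v$) and then adding a new pendent vertex (named $v$) adjacent to $u$. Then $SO(G)<SO(G')$.
   Context: For a graph $G$, $d_G(w)$ denotes the degree of vertex $w$, and the Sombor index is $SO(G)=\sum_{ab\in E(G)}\sqrt{d_G(a)^2+d_G(b)^2}$. A cut edge is an edge whose deletion disconnects the graph; it is pendent if one of its end vertices has degree one. *)

(* Defs.v *)
From HB Require Import structures.
From mathcomp Require Import all_boot all_order all_algebra.
Set Implicit Arguments. Unset Strict Implicit. Unset Printing Implicit Defensive.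
Import Order.TTheory GRing.Theory Num.Theory.

Definition simple_graph (T : finType) (e : rel T) : Prop :=
  symmetric e /\ irreflexive e.

Definition connected_graph (T : finType) (e : rel T) : Prop :=
  forall x y : T, connect e x y.

Definition deg (T : finType) (e : rel T) (w : T) : nat := #|[set b | e w b]|.

Definition del_edge (T : finType) (e : rel T) (u v : T) : rel T :=
  [rel x y | e x y && ~~ ((x == u) && (y == v) || (x == v) && (y == u))].

Definition cut_edge (T : finType) (e : rel T) (u v : T) : Prop :=
  e u v /\ ~ connected_graph (del_edge e u v).

(* Sombor index: sum over (unordered) edges ab of sqrt(d(a)^2 + d(b)^2),
   written as half of the sum over ordered adjacent pairs. *)
Local Open Scope ring_scope.
Definition sombor (R : rcfType) (T : finType) (e : rel T) : R :=
  (\sum_(a : T) \sum_(b : T | e a b)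
     Num.sqrt (((deg e a)%:R) ^+ 2 + ((deg e b)%:R) ^+ 2)) / 2%:R.
Local Close Scope ring_scope.

(* G': contract uv onto u (u becomes adjacent to all former neighbours of u
   and v other than u, v), then add a new pendent vertex named v adjacent
   to u.  Vertex set unchanged. *)
Definition contract_pendent (T : finType) (e : rel T) (u v : T) : rel T :=
  [rel x y |
    if x == v then y == u
    else if y == v then x == u
    else if x == u then (y != u) && (e u y || e v y)
    else if y == u then e u x || e v x
    else e x y].

(* Main.v *)
Require Import Defs.
From HB Require Import structures.
From mathcomp Require Import all_boot all_order all_algebra.
From mathcomp Require Import zify ring lra.
Import Order.TTheory GRing.Theory Num.Theory.
Local Open Scope ring_scope.

Lemma sqrt_le_nat (R : rcfType) (m1 m2 n1 n2 : nat) :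
  (m1 ^ 2 + m2 ^ 2 <= n1 ^ 2 + n2 ^ 2)%N ->
  Num.sqrt ((m1%:R : R) ^+ 2 + (m2%:R) ^+ 2) <= Num.sqrt ((n1%:R) ^+ 2 + (n2%:R) ^+ 2).
Proof.
move=> H; rewrite -!natrX -!natrD ler_sqrt ?ler0n // ler_nat //.
Qed.

Lemma sqrt_lt_nat (R : rcfType) (m1 m2 n1 n2 : nat) :
  (m1 ^ 2 + m2 ^ 2 < n1 ^ 2 + n2 ^ 2)%N ->
  Num.sqrt ((m1%:R : R) ^+ 2 + (m2%:R) ^+ 2) < Num.sqrt ((n1%:R) ^+ 2 + (n2%:R) ^+ 2).
Proof.
move=> H; rewrite -!natrX -!natrD ltr_sqrt ?ltr_nat //.
by rewrite ltr0n; apply: leq_ltn_trans H.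
Qed.

Lemma no_common (T : finType) (e : rel T) (u v w : T) :
  simple_graph e -> connected_graph e -> cut_edge e u v -> e u w -> e v w -> False.
Proof.
move=> [sym irr] con [euv ncon] euw evw; apply: ncon => x y.
have uv : u != v by apply: contraTneq euv => ->; rewrite irr.
have wu : w != u by apply: contraTneq euw => ->; rewrite irr.
have wv : w != v by apply: contraTneq evw => ->; rewrite irr.
apply: (connect_sub _ (con x y)) => a b eab.
set d := del_edge e u v.
have duw : d u w by rewrite /d /del_edge /= euw /= eqxx (negbTE wv) (negbTE wu) /= andbF.
have dwv : d w v by rewrite /d /del_edge /= sym evw /= (negbTE wv) (negbTE wu).
have dvw : d v w by rewrite /d /del_edge /= evw /= (negbTE wv) (negbTE wu) /= !andbF.
have dwu : d w u by rewrite /d /del_edge /= sym euw /= (negbTE wv) (negbTE wu).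
case: (boolP ((a == u) && (b == v) || (a == v) && (b == u))).
  case/orP=> /andP[/eqP -> /eqP ->].
    by apply: connect_trans (connect1 duw) (connect1 dwv).
  by apply: connect_trans (connect1 dvw) (connect1 dwu).
by move=> H; apply: connect1; rewrite /d /del_edge /= eab H.
Qed.
Lemma nL1 (a b : nat) : (2 <= b)%N -> (a <= (a + b).-1)%N.
Proof. move=> h; lia. Qed.
Lemma nL2 (a b : nat) : (2 <= a)%N -> (b <= (a + b).-1)%N.
Proof. move=> h; lia. Qed.
Lemma nL3 (m1 m2 n1 n2 : nat) : (m1 <= n1)%N -> (m2 <= n2)%N ->
  (m1 ^ 2 + m2 ^ 2 <= n1 ^ 2 + n2 ^ 2)%N.
Proof. by move=> h1 h2; rewrite leq_add // leq_exp2r. Qed.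
Lemma nL4 (a b : nat) : (2 <= a)%N -> (2 <= b)%N ->
  (a ^ 2 + b ^ 2 < ((a + b).-1) ^ 2 + 1 ^ 2)%N.
Proof. move=> ha hb; rewrite -subn1; nia. Qed.
Lemma nL4' (a b : nat) : (2 <= a)%N -> (2 <= b)%N ->
  (b ^ 2 + a ^ 2 <= 1 ^ 2 + ((a + b).-1) ^ 2)%N.
Proof. move=> ha hb; rewrite addnC [X in (_ <= X)%N]addnC; exact/ltnW/nL4. Qed.

Theorem lemma3p1 (R : rcfType) (T : finType) (e : rel T) (u v : T) :
  simple_graph e -> connected_graph e -> cut_edge e u v ->
  (2 <= deg e u)%N -> (2 <= deg e v)%N ->
  sombor R e < sombor R (contract_pendent e u v).
Proof.
move=> sg con cut da db.
have nc w := @no_common _ _ _ _ w sg con cut.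
case: sg => sym irr; case: cut => euv _.
have uv : u != v by apply: contraTneq euv => ->; rewrite irr.
set e' := contract_pendent e u v.
pose sw x := if x == u then v else if x == v then u else x.
pose c z := (z != u) && (z != v) && e v z.
pose phi (p : T * T) := (if c p.2 then sw p.1 else p.1, if c p.1 then sw p.2 else p.2).
have swK : involutive sw.
  move=> x; rewrite /sw; case: (eqVneq x u) => [->|xu]; first by rewrite eqxx /= (eq_sym v u) (negbTE uv) ?eqxx.
  case: (eqVneq x v) => [->|xv]; first by rewrite eqxx.
  by rewrite (negbTE xu) (negbTE xv).
have cK x : c (sw x) = c x.
  rewrite /c /sw; case: (eqVneq x u) => [->|xu].
    by rewrite ?eqxx /= ?(eq_sym v u) ?(negbTE uv) /= ?eqxx /= ?andbF.
  case: (eqVneq x v) => [->|xv].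
    by rewrite ?eqxx /= ?(eq_sym v u) ?(negbTE uv) /= ?eqxx /= ?andbF.
  by rewrite (negbTE xu) (negbTE xv).
have phiK : involutive phi.
  case=> x y; rewrite /phi /=; case cx: (c x); case cy: (c y);
  by rewrite ?cK ?cx ?cy ?swK.
have vu : v != u by rewrite eq_sym.
have swu : sw u = v by rewrite /sw eqxx.
have swv : sw v = u by rewrite /sw (negbTE vu) eqxx.
have swo x : x != u -> x != v -> sw x = x by move=> xu xv; rewrite /sw (negbTE xu) (negbTE xv).
have cu : c u = false by rewrite /c eqxx.
have cv : c v = false by rewrite /c eqxx andbF.
have co x : x != u -> x != v -> c x = e v x by move=> xu xv; rewrite /c xu xv.
have e'v y : e' v y = (y == u) by rewrite /e' /contract_pendent /= eqxx.
have e'u y : y != u -> y != v -> e' u y = e u y || e v y.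
  by move=> yu yv; rewrite /e' /contract_pendent /= (negbTE uv) (negbTE yv) eqxx yu.
have e'u' x : x != u -> x != v -> e' x u = e u x || e v x.
  by move=> yu yv; rewrite /e' /contract_pendent /= (negbTE uv) (negbTE yv) eqxx (negbTE yu).
have e'xv x : x != v -> e' x v = (x == u).
  by move=> xv; rewrite /e' /contract_pendent /= (negbTE xv) eqxx.
have e'uu : e' u u = false by rewrite /e' /contract_pendent /= (negbTE uv) eqxx.
have e'uv : e' u v = true by rewrite /e' /contract_pendent /= (negbTE uv) !eqxx.
have e'o x y : x != u -> x != v -> y != u -> y != v -> e' x y = e x y.
  by move=> xu xv yu yv; rewrite /e' /contract_pendent /= (negbTE xu) (negbTE xv) (negbTE yu) (negbTE yv).
have ephi p : e' (phi p).1 (phi p).2 = e p.1 p.2.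
  case: p => x y; rewrite /phi /=.
  case: (eqVneq x u) => [->|xu]; [|case: (eqVneq x v) => [->|xv]];
  (case: (eqVneq y u) => [->|yu]; [|case: (eqVneq y v) => [->|yv]]);
  rewrite ?cu ?cv ?irr ?e'uu ?e'uv ?e'v ?eqxx ?(negbTE vu) //.
  - rewrite co // swu; case evy: (e v y).
      rewrite e'v (negbTE yu); apply/esym/negbTE/negP => euy; exact: nc y euy evy.
    by rewrite e'u // evy orbF.
  - by rewrite sym.
  - rewrite co // swv; case evy: (e v y); first by rewrite e'u // evy orbT.
    by rewrite e'v (negbTE yu).
  - rewrite co // swu; case evx: (e v x).
      rewrite e'xv // (negbTE xu) sym; apply/esym/negbTE/negP => eux; exact: nc x eux evx.
    by rewrite e'u' // evx orbF sym.
  - rewrite co // swv; case evx: (e v x); first by rewrite e'u' // evx orbT sym.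
    by rewrite e'xv // (negbTE xu) sym evx.
  - rewrite (co x) // (co y) // !swo //; case: (e v x); case: (e v y); exact: e'o.
have Dv : deg e' v = 1%N.
  rewrite /deg (_ : [set b | e' v b] = [set u]) ?cards1 //.
  by apply/setP => b; rewrite !inE e'v.
have Do w : w != u -> w != v -> deg e' w = deg e w.
  move=> wu wv; pose f b := if e v w then sw b else b.
  have finj : injective f.
    rewrite /f; case: (e v w); [exact: (can_inj swK) | exact: inj_id].
  suff E : [set b | e' w b] = f @^-1: [set b | e w b].
    by rewrite /deg E card_preimset.
  apply/setP => b.
  rewrite !inE /f.
  case: (eqVneq b u) => [->|bu]; [|case: (eqVneq b v) => [->|bv]].
  - rewrite e'u' // swu; case evw: (e v w); first by rewrite orbT sym.
    by rewrite orbF sym.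
  - rewrite e'xv // (negbTE wu) swv; case evw: (e v w).
      apply/esym/negbTE/negP => ewu; apply: (nc w); [by rewrite sym | exact: evw].
    by rewrite sym.
  - by rewrite swo // e'o //; case: (e v w).
have Du : deg e' u = (deg e u + deg e v).-1.
  rewrite /deg (_ : [set b | e' u b] = ([set b | e u b] :|: [set b | e v b]) :\ u).
    have := cardsD1 u ([set b | e u b] :|: [set b | e v b]).
    rewrite cardsU (_ : [set b | e u b] :&: [set b | e v b] = set0) ?cards0.
      rewrite !inE sym euv orbT subn0 add1n => ->; by [].
    apply/setP => b; rewrite !inE; apply/negbTE/negP => /andP[h1 h2]; exact: nc b h1 h2.
  apply/setP => b; rewrite !inE.
  case: (eqVneq b u) => [->|bu]; [by rewrite e'uu|case: (eqVneq b v) => [->|bv]].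
  - by rewrite e'uv euv.
  - by rewrite e'u.
have comp x y : e x y -> ~~((x == u) && (y == v)) -> ~~((x == v) && (y == u)) ->
    (deg e x <= deg e' (if c y then sw x else x))%N.
  move=> exy h1 h2.
  have yx : y != x by apply: contraTneq exy => ->; rewrite irr.
  case: (eqVneq x u) => [xu|xu]; [|case: (eqVneq x v) => [xv|xv]].
  - subst x; rewrite eqxx /= in h1.
    rewrite co //; case evy: (e v y); first by case: (nc y exy evy).
    rewrite Du; exact: nL1.
  - subst x; rewrite eqxx /= in h2.
    rewrite co // exy swv Du; exact: nL2.
  - by case: (c y); rewrite ?swo // Do.
have phiuv : phi (u, v) = (u, v) by rewrite /phi /= cu cv.
pose F (E : rel T) (p : T * T) : R :=
  Num.sqrt (((deg E p.1)%:R) ^+ 2 + ((deg E p.2)%:R) ^+ 2).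
have pt p : e p.1 p.2 -> F e p <= F e' (phi p).
  case: p => x y /= exy.
  case: (boolP ((x == u) && (y == v))) => [/andP[/eqP -> /eqP ->]|h1].
    rewrite phiuv /F /=; apply: sqrt_le_nat; rewrite Dv Du; exact/ltnW/nL4.
  case: (boolP ((x == v) && (y == u))) => [/andP[/eqP -> /eqP ->]|h2].
    rewrite /phi /= cu cv /F /=; apply: sqrt_le_nat; rewrite Dv Du; exact: nL4'.
  rewrite /F /phi /=; apply: sqrt_le_nat.
  have c1 := comp x y exy h1 h2.
  have c2 : (deg e y <= deg e' (if c x then sw y else y))%N.
    apply: comp; [by rewrite sym | by rewrite andbC | by rewrite andbC].
  exact: nL3.
have strict : F e (u, v) < F e' (phi (u, v)).
  rewrite phiuv /F /=; apply: sqrt_lt_nat; rewrite Dv Du; exact: nL4.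
rewrite /sombor ltr_pM2r ?invr_gt0 ?ltr0n //.
rewrite !(pair_big_dep xpredT) /=.
rewrite [X in _ < X](reindex_inj (can_inj phiK)) /=.
rewrite [X in _ < X](eq_bigl (fun p : T * T => e p.1 p.2)); last by move=> p; rewrite ephi.
rewrite (bigD1 (u, v)) //= [X in _ < X](bigD1 (u, v)) //=.
apply: ltr_leD; first exact: strict.
by apply: ler_sum => p /andP[ep _]; apply: pt.
Qed.
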